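(* Let $G$ be a group with a finite generating set $S$ not containing the identity, and let $d_W$ and $d_C$ be the word metric and the cardinal metric on $G$ with respect to $S$. If $(G,d_W)$ has infinite diameter, then $(G,d_W)$ and $(G,d_C)$ are not quasi-isometric.
   Context: The word metric: $d_W(g,g)=0$ and for $g\ne h$, $d_W(g,h)$ is the least $n\in\mathbb{N}$ such that $g^{-1}h=s_1^{\epsilon_1}\cdots s_n^{\epsilon_n}$ with $s_i\in S$, $\epsilon_i\in\{\pm1\}$. The cardinal norm is $\|g\| = \min\{|A| : A\subseteq S,\ g\in\langle A\rangle\}$, where $\langle A\rangle$ is the subgroup generated by $A$, and $d_C(g,h)=\|g^{-1}h\|$. *)

(* Defs.v *)
From Stdlib Require Import Reals List Lra ClassicalEpsilon.
Import ListNotations.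
Open Scope R_scope.

Set Implicit Arguments.

Record is_group (T : Type) (mul : T -> T -> T) (inv : T -> T) (e : T) : Prop := {
  grp_assoc : forall x y z, mul x (mul y z) = mul (mul x y) z;
  grp_id_l : forall x, mul e x = x;
  grp_id_r : forall x, mul x e = x;
  grp_inv_l : forall x, mul (inv x) x = e;
  grp_inv_r : forall x, mul x (inv x) = e }.

Section Group.
Variables (T : Type) (mul : T -> T -> T) (inv : T -> T) (e : T).

Definition is_subgroup (H : T -> Prop) : Prop :=
  H e /\ (forall x y, H x -> H y -> H (mul x y)) /\ (forall x, H x -> H (inv x)).

Definition in_gen (A : list T) (x : T) : Prop :=
  forall H : T -> Prop, is_subgroup H -> (forall a, In a A -> H a) -> H x.

(* evaluation of a word s_1^eps_1 ... s_n^eps_n ; true = +1, false = -1 *)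
Definition letter (p : T * bool) : T := if snd p then fst p else inv (fst p).
Definition eval_word (w : list (T * bool)) : T := fold_right (fun p acc => mul (letter p) acc) e w.

Definition word_rep (S : list T) (x : T) (n : nat) : Prop :=
  exists w : list (T * bool), length w = n /\ (forall p, In p w -> In (fst p) S) /\ eval_word w = x.

Definition card_rep (S : list T) (x : T) (n : nat) : Prop :=
  exists A : list T, NoDup A /\ length A = n /\ incl A S /\ in_gen A x.

End Group.

(* the least natural number satisfying P (meaningful when one exists) *)
Definition is_least (P : nat -> Prop) (n : nat) : Prop := P n /\ forall m, P m -> (n <= m)%nat.
Definition least_nat (P : nat -> Prop) : nat := epsilon (inhabits 0%nat) (is_least P).

Definition word_dist (T : Type) (mul : T -> T -> T) (inv : T -> T) (e : T) (S : list T) (g h : T) : nat :=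
  least_nat (word_rep mul inv e S (mul (inv g) h)).

Definition card_norm (T : Type) (mul : T -> T -> T) (inv : T -> T) (e : T) (S : list T) (x : T) : nat :=
  least_nat (card_rep mul inv e S x).
Definition card_dist (T : Type) (mul : T -> T -> T) (inv : T -> T) (e : T) (S : list T) (g h : T) : nat :=
  card_norm mul inv e S (mul (inv g) h).

Definition infinite_diameter (X : Type) (d : X -> X -> nat) : Prop :=
  forall N : nat, exists x y, (N <= d x y)%nat.

Definition quasi_isometric (X Y : Type) (dX : X -> X -> nat) (dY : Y -> Y -> nat) : Prop :=
  exists (f : X -> Y) (K C : R), 1 <= K /\ 0 <= C /\
    (forall x1 x2, INR (dX x1 x2) / K - C <= INR (dY (f x1) (f x2)) /\
                   INR (dY (f x1) (f x2)) <= K * INR (dX x1 x2) + C) /\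
    (forall y, exists x, INR (dY y (f x)) <= C).

(* Main.v *)
Require Import Defs.
From Stdlib Require Import Reals List Lra Lia Classical ClassicalEpsilon.
Import ListNotations.
Open Scope R_scope.

Lemma least_exists (P : nat -> Prop) (m : nat) : P m -> exists n, is_least P n.
Proof.
  induction m as [m IH] using (well_founded_induction Wf_nat.lt_wf).
  intro Hm.
  destruct (classic (exists k, (k < m)%nat /\ P k)) as [[k [Hk Pk]]|Hn].
  - exact (IH k Hk Pk).
  - exists m. split; auto. intros m' Pm'.
    destruct (Nat.lt_ge_cases m' m); auto.
    exfalso; apply Hn; eauto.
Qed.

Lemma least_le (P : nat -> Prop) (m : nat) : P m -> (least_nat P <= m)%nat.
Proof.
  intro Hm. unfold least_nat.
  destruct (epsilon_spec (inhabits 0%nat) (is_least P) (least_exists P m Hm)) as [_ H].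
  apply H; auto.
Qed.

Lemma nodup_sub (T : Type) (S : list T) :
  exists A, NoDup A /\ incl A S /\ incl S A.
Proof.
  induction S as [|a S [A [HA [H1 H2]]]].
  - exists []. repeat split; try constructor; intros x Hx; inversion Hx.
  - destruct (classic (In a A)) as [Hi|Hi].
    + exists A. repeat split; auto.
      * intros x Hx; right; auto.
      * intros x [<-|Hx]; auto.
    + exists (a :: A). repeat split.
      * constructor; auto.
      * intros x [<-|Hx]; [left; auto| right; auto].
      * intros x [<-|Hx]; [left; auto| right; auto].
Qed.

Theorem mainTheorem6 (T : Type) (mul : T -> T -> T) (inv : T -> T) (e : T)
  (HG : is_group mul inv e) (S : list T)
  (HS_gen : forall g : T, in_gen mul inv e S g)
  (HS_e : ~ In e S) :
  infinite_diameter (word_dist mul inv e S) ->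
  ~ quasi_isometric (word_dist mul inv e S) (card_dist mul inv e S).
Proof.
  intros Hinf [f [K [C [HK [HC [Hq _]]]]]].
  destruct (nodup_sub _ S) as [A [HA [H1 H2]]].
  assert (Hb : forall g h, (card_dist mul inv e S g h <= length A)%nat).
  { intros g h. unfold card_dist, card_norm. apply least_le.
    exists A. repeat split; auto.
    intros H Hs HAH. apply (HS_gen (mul (inv g) h) H Hs).
    intros a Ha; apply HAH, H2, Ha. }
  destruct (INR_archimed 1 (K * (INR (length A) + C))) as [N HN]; [lra|].
  destruct (Hinf N) as [x [y Hxy]].
  destruct (Hq x y) as [Hl _].
  pose proof (Hb (f x) (f y)) as Hb'.
  apply le_INR in Hb'. apply le_INR in Hxy.
  assert (INR (word_dist mul inv e S x y) / K <= INR (length A) + C) by lra.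
  assert (INR (word_dist mul inv e S x y) <= K * (INR (length A) + C)).
  { set (w := INR (word_dist mul inv e S x y)) in *.
    assert (Hw : w = K * (w / K)) by (field; lra).
    rewrite Hw. apply Rmult_le_compat_l; lra. }
  lra.
Qed.
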